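(* Let $x\geq0$ and $h\in\mathbb{R}$ satisfy $|h|\leq\frac{1}{3\max\{x,1\}}$. Then \[\exp(-3|h|\max\{x,1\})\leq\frac{1-\Phi(x+h)}{1-\Phi(x)}\leq\exp(3|h|\max\{x,1\}).\]
   Context: $\Phi(x):=\int_{-\infty}^x\frac{e^{-t^2/2}}{\sqrt{2\pi}}dt$ is the standard Gaussian c.d.f. *)

(* Defs.v *)
From Stdlib Require Import Reals.
From Coquelicot Require Import Coquelicot.
Open Scope R_scope.

Definition gauss_pdf (t : R) : R := exp (- t ^ 2 / 2) / sqrt (2 * PI).

Definition Phi (x : R) : R :=
  RInt_gen gauss_pdf (Rbar_locally m_infty) (at_point x).

(* Main.v *)
From Stdlib Require Import Reals Lra Psatz.
From Coquelicot Require Import Coquelicot.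
Require Import Defs.
From Stdlib Require Import FunctionalExtensionality.
Open Scope R_scope.

Definition ee (t : R) : R := exp (- t ^ 2 / 2).
Definition AA (x : R) : R := RInt ee 0 x.
Definition kk (u t : R) : R := exp (- (u ^ 2 * (1 + t ^ 2)) / 2) / (1 + t ^ 2).
Definition kd (u t : R) : R := - u * exp (- (u ^ 2 * (1 + t ^ 2)) / 2).
Definition BB (x : R) : R := RInt (fun t => kk x t) 0 1.

Lemma dcont (f : R -> R) x : ex_derive f x -> continuous f x.
Proof. intros H. exact (ex_derive_continuous f x H). Qed.

Lemma exRI (f : R -> R) a b : (forall z, continuous f z) -> ex_RInt f a b.
Proof. intros H. apply (ex_RInt_continuous (V:=R_CompleteNormedModule)). intros; apply H. Qed.

Lemma ee_cont x : continuous ee x.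
Proof. apply dcont. unfold ee. auto_derive. auto. Qed.

Lemma ee_ex a b : ex_RInt ee a b.
Proof. apply exRI. intros; apply ee_cont. Qed.

Lemma AA_derive x : is_derive AA x (ee x).
Proof.
  apply (is_derive_RInt ee AA 0 x).
  - apply filter_forall. intros b. apply (RInt_correct (V:=R_CompleteNormedModule)), ee_ex.
  - apply ee_cont.
Qed.

Lemma pos1t t : 0 < 1 + t ^ 2.
Proof. nra. Qed.

Lemma kk_derive u t : is_derive (fun z => kk z t) u (kd u t).
Proof.
  unfold kk, kd. auto_derive. { generalize (pos1t t); lra. }
  replace (exp (- (u * (u * 1) * (1 + t * (t * 1))) * / 2)) with (exp (- (u ^ 2 * (1 + t ^ 2)) / 2)) by (f_equal; field).
  field. generalize (pos1t t); simpl; lra.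
Qed.

Lemma kk_cont u t : continuous (kk u) t.
Proof. apply dcont. unfold kk. auto_derive. generalize (pos1t t); lra. Qed.

Lemma kk_ex u a b : ex_RInt (kk u) a b.
Proof. apply exRI. intros; apply kk_cont. Qed.

Lemma kd_cont2 x t : continuity_2d_pt kd x t.
Proof.
  unfold kd.
  apply continuity_2d_pt_mult.
  - apply continuity_2d_pt_opp, continuity_2d_pt_id1.
  - apply (continuity_1d_2d_pt_comp exp (fun u t => - (u ^ 2 * (1 + t ^ 2)) / 2)).
    + apply derivable_continuous_pt, derivable_pt_exp.
    + unfold Rdiv. apply continuity_2d_pt_mult; [|apply continuity_2d_pt_const].
      apply continuity_2d_pt_opp. simpl.
      apply continuity_2d_pt_mult.
      * apply continuity_2d_pt_mult; [apply continuity_2d_pt_id1|].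
        apply continuity_2d_pt_mult; [apply continuity_2d_pt_id1|apply continuity_2d_pt_const].
      * apply continuity_2d_pt_plus; [apply continuity_2d_pt_const|].
        apply continuity_2d_pt_mult; [apply continuity_2d_pt_id2|].
        apply continuity_2d_pt_mult; [apply continuity_2d_pt_id2|apply continuity_2d_pt_const].
Qed.

Lemma BB_derive x : is_derive BB x (- ee x * AA x).
Proof.
  assert (H := is_derive_RInt_param kk 0 1 x).
  assert (Hd : forall u v, Derive (fun z => kk z v) u = kd u v).
  { intros; apply is_derive_unique, kk_derive. }
  unfold BB.
  replace (- ee x * AA x) with (RInt (fun t => Derive (fun u => kk u t) x) 0 1).
  apply H.
  - apply filter_forall. intros y t _. eexists; apply kk_derive.
  - intros t _. eapply continuity_2d_pt_ext; [|apply (kd_cont2 x t)].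
    intros; symmetry; apply Hd.
  - apply filter_forall. intros; apply kk_ex.
  - rewrite (RInt_ext _ (fun t => scal (- ee x) (scal x (ee (x * t + 0))))).
    + rewrite (RInt_scal (V:=R_CompleteNormedModule)).
      * rewrite (RInt_comp_lin (V:=R_CompleteNormedModule)). 2: apply ee_ex.
        unfold AA, scal; simpl; unfold mult; simpl.
        rewrite Rmult_0_r, Rmult_1_r, !Rplus_0_r. reflexivity.
      * apply exRI. intros. apply dcont.
        unfold ee, scal; simpl; unfold mult; simpl. auto_derive. auto.
    + intros t _. rewrite Hd. unfold kd, ee, scal; simpl; unfold mult; simpl.
      assert (E: exp (- (x * (x * 1) * (1 + t * (t * 1))) / 2) = exp (- (x * (x * 1)) / 2) * exp (- ((x * t + 0) * ((x * t + 0) * 1)) / 2)).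
      { rewrite <- exp_plus; f_equal; field. }
      rewrite E. ring.
Qed.

Definition HH (x : R) : R := AA x * AA x + 2 * BB x.

Lemma HH_derive x : is_derive HH x 0.
Proof.
  assert (H1 := is_derive_mult AA AA x _ _ (AA_derive x) (AA_derive x)).
  assert (H2 := is_derive_scal BB x 2 _ (BB_derive x)).
  assert (H3 := is_derive_plus _ _ x _ _ (H1 (fun a b => Rmult_comm a b)) H2).
  unfold HH. eapply is_derive_ext; [|].
  2: { replace 0 with (plus (plus (mult (ee x) (AA x)) (mult (AA x) (ee x))) (scal 2 (- ee x * AA x))).
       exact H3. unfold plus, mult, scal; simpl; unfold mult; simpl. ring. }
  intros t; reflexivity.
Qed.

Lemma HH_const x : HH x = HH 0.
Proof.
  assert (H1 : is_RInt (fun _ => 0) 0 x (minus (HH x) (HH 0))).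
  { apply (is_RInt_derive (V:=R_CompleteNormedModule) HH (fun _ => 0)).
    - intros; apply HH_derive.
    - intros; apply continuous_const. }
  assert (H2 := is_RInt_const 0 x 0).
  assert (E := is_RInt_unique _ _ _ _ H1).
  rewrite (is_RInt_unique _ _ _ _ H2) in E.
  unfold minus, plus, opp, scal in E; simpl in E; unfold mult in E; simpl in E.
  lra.
Qed.

Lemma BB0 : BB 0 = PI / 4.
Proof.
  unfold BB.
  rewrite (RInt_ext _ (fun t => / (1 + t²))).
  - rewrite (is_RInt_unique _ 0 1 (minus (atan 1) (atan 0))).
    + rewrite atan_1, atan_0. unfold minus, plus, opp; simpl. lra.
    + apply (is_RInt_derive (V:=R_CompleteNormedModule) atan).
      * intros; apply is_derive_atan.
      * intros. apply dcont. auto_derive. unfold Rsqr. nra.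
  - intros t _. unfold kk. unfold Rsqr.
    replace (- (0 ^ 2 * (1 + t ^ 2)) / 2) with 0 by (simpl; field).
    rewrite exp_0. simpl. field. nra.
Qed.

Lemma HH_val x : HH x = PI / 2.
Proof.
  rewrite HH_const. unfold HH. rewrite BB0. unfold AA. rewrite RInt_point.
  unfold zero; simpl. lra.
Qed.

Lemma BB_bounds x : 0 <= BB x <= ee x.
Proof.
  split.
  - unfold BB. apply RInt_ge_0; [lra|apply kk_ex|].
    intros t _. unfold kk. apply Rlt_le, Rdiv_lt_0_compat; [apply exp_pos|apply pos1t].
  - unfold BB. apply Rle_trans with (RInt (fun _ => ee x) 0 1).
    + apply RInt_le; [lra|apply kk_ex|apply ex_RInt_const|].
      intros t Ht. unfold kk, ee.
      assert (E : exp (- (x ^ 2 * (1 + t ^ 2)) / 2) <= exp (- x ^ 2 / 2)).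
      { destruct (Req_dec (x^2*t^2) 0) as [Z|Z].
        - right. f_equal. nra.
        - left. apply exp_increasing. assert (0 <= x^2*t^2) by nra. lra. }
      assert (P := pos1t t). assert (Q := exp_pos (- (x ^ 2 * (1 + t ^ 2)) / 2)).
      apply Rle_trans with (exp (- (x ^ 2 * (1 + t ^ 2)) / 2)); [|exact E].
      unfold Rdiv at 1. rewrite <- (Rmult_1_r (exp _)) at 2.
      apply Rmult_le_compat_l; [lra|]. rewrite <- Rinv_1. apply Rinv_le_contravar; nra.
    + rewrite RInt_const. unfold scal; simpl; unfold mult; simpl. lra.
Qed.

Lemma AA_sq x : AA x * AA x = PI / 2 - 2 * BB x.
Proof. generalize (HH_val x). unfold HH. lra. Qed.

Lemma AA_nonpos x : x <= 0 -> AA x <= 0.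
Proof.
  intros Hx. unfold AA.
  rewrite <- (opp_RInt_swap (V:=R_CompleteNormedModule)); [|apply ee_ex].
  unfold opp; simpl.
  assert (0 <= RInt ee x 0).
  { apply RInt_ge_0; [lra|apply ee_ex|]. intros; unfold ee; apply Rlt_le, exp_pos. }
  lra.
Qed.

Definition ss : R := sqrt (PI / 2).
Definition cc : R := sqrt (2 * PI).

Lemma ss_pos : 0 < ss.
Proof. unfold ss. apply sqrt_lt_R0. generalize PI_RGT_0; lra. Qed.

Lemma ss_sq : ss * ss = PI / 2.
Proof. unfold ss. apply sqrt_sqrt. generalize PI_RGT_0; lra. Qed.

Lemma cc_eq : cc = 2 * ss.
Proof.
  unfold cc, ss. replace (2 * PI) with (4 * (PI / 2)) by field.
  rewrite sqrt_mult; [|lra|generalize PI_RGT_0; lra].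
  replace 4 with (2 * 2) by ring. rewrite sqrt_square; lra.
Qed.

Lemma cc_pos : 0 < cc.
Proof. rewrite cc_eq. generalize ss_pos; lra. Qed.

Lemma gauss_ee t : gauss_pdf t = / cc * ee t.
Proof. unfold gauss_pdf, ee. fold cc. generalize cc_pos; intro. field. lra. Qed.

Definition FF (x : R) : R := RInt gauss_pdf 0 x.

Lemma gauss_cont x : continuous gauss_pdf x.
Proof. apply dcont. unfold gauss_pdf. auto_derive. auto. Qed.

Lemma gauss_ex a b : ex_RInt gauss_pdf a b.
Proof. apply exRI. apply gauss_cont. Qed.

Lemma FF_AA x : FF x = AA x / cc.
Proof.
  unfold FF, AA. rewrite (RInt_ext _ (fun t => scal (/ cc) (ee t))).
  - rewrite (RInt_scal (V:=R_CompleteNormedModule)); [|apply ee_ex].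
    unfold scal; simpl; unfold mult; simpl. field. generalize cc_pos; lra.
  - intros t _. rewrite gauss_ee. reflexivity.
Qed.

Lemma Derive_FF : Derive FF = gauss_pdf.
Proof.
  apply functional_extensionality. intro x.
  apply is_derive_unique.
  apply (is_derive_RInt gauss_pdf FF 0 x).
  - apply filter_forall. intros b. apply (RInt_correct (V:=R_CompleteNormedModule)), gauss_ex.
  - apply gauss_cont.
Qed.

Lemma ee_bound t : ee t <= 1 / (1 + t ^ 2 / 2).
Proof.
  unfold ee. assert (H := exp_ineq1_le (t ^ 2 / 2)).
  assert (0 <= t^2) by nra.
  replace (- t ^ 2 / 2) with (- (t ^ 2 / 2)) by field. rewrite exp_Ropp.
  unfold Rdiv. rewrite Rmult_1_l. apply Rinv_le_contravar; lra.
Qed.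

Lemma AA_close t : t <= 0 -> Rabs (AA t + ss) <= 2 * ee t / ss.
Proof.
  intros Ht. assert (N := AA_nonpos t Ht). assert (S := AA_sq t).
  assert (B := BB_bounds t). assert (P := ss_pos). assert (Q := ss_sq).
  assert (L : - ss <= AA t) by nra.
  rewrite Rabs_pos_eq; [|lra].
  apply Rmult_le_reg_l with ss; [lra|].
  replace (ss * (2 * ee t / ss)) with (2 * ee t) by (field; lra).
  nra.
Qed.

Lemma FF_lim : filterlim FF (Rbar_locally m_infty) (locally (- / 2)).
Proof.
  intros P [eps HP].
  assert (P0 := ss_pos). assert (E := cc_eq).
  set (d := eps * cc * ss / 2).
  assert (Hd : 0 < d).
  { unfold d. generalize (cond_pos eps) cc_pos; intros. apply Rmult_lt_0_compat; [|lra]. 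
    apply Rmult_lt_0_compat; [apply Rmult_lt_0_compat|]; lra. }
  unfold filtermap; simpl.
  exists (- (2 / d + 1)). intros t Ht.
  apply HP.
  assert (Ht0 : t <= 0). { assert (0 < 2 / d) by (apply Rdiv_lt_0_compat; lra). lra. }
  assert (C := AA_close t Ht0).
  assert (EB := ee_bound t).
  assert (Hd2 : 2 / d < t ^ 2 / 2).
  { assert (0 < 2 / d) by (apply Rdiv_lt_0_compat; lra). nra. }
  assert (Hee : ee t < d / 2).
  { apply Rle_lt_trans with (1 / (1 + t ^ 2 / 2)); [exact EB|].
    apply Rmult_lt_reg_r with (1 + t ^ 2 / 2). nra.
    unfold Rdiv at 1. rewrite Rmult_1_l, Rinv_l by nra.
    assert (d * (2 / d) = 2) by (field; lra). nra. }
  change (Rabs (FF t - - / 2) < eps).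
  rewrite FF_AA.
  replace (AA t / cc - - / 2) with ((AA t + ss) / cc) by (rewrite E; field; lra).
  unfold Rdiv. rewrite Rabs_mult, Rabs_inv, (Rabs_pos_eq cc) by (generalize cc_pos; lra).
  apply Rmult_lt_reg_r with cc; [apply cc_pos|].
  rewrite Rmult_assoc, Rinv_l, Rmult_1_r by (generalize cc_pos; lra).
  apply Rle_lt_trans with (2 * ee t / ss); [exact C|].
  apply Rmult_lt_reg_r with ss; [lra|].
  unfold Rdiv. rewrite Rmult_assoc, Rinv_l, Rmult_1_r by lra.
  unfold d in Hee, Hd. lra.
Qed.

Lemma Phi_val x : Phi x = FF x + / 2.
Proof.
  unfold Phi.
  assert (H : is_RInt_gen (Derive FF) (Rbar_locally m_infty) (at_point x) (FF x - - / 2)).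
  { apply is_RInt_gen_Derive.
    - apply filter_forall. intros ab y _. exists (gauss_pdf y).
      apply (is_derive_RInt gauss_pdf FF 0 y).
      + apply filter_forall. intros b. apply (RInt_correct (V:=R_CompleteNormedModule)), gauss_ex.
      + apply gauss_cont.
    - apply filter_forall. intros ab y _. rewrite Derive_FF. apply gauss_cont.
    - apply FF_lim.
    - intros P HP. unfold filtermap, at_point. apply locally_singleton. exact HP. }
  rewrite Derive_FF in H.
  rewrite (is_RInt_gen_unique (V:=R_CompleteNormedModule) _ _ H). lra.
Qed.

Lemma gauss_pos t : 0 < gauss_pdf t.
Proof. rewrite gauss_ee. apply Rmult_lt_0_compat; [apply Rinv_0_lt_compat, cc_pos|apply exp_pos]. Qed.

Lemma FF_le x : FF x <= / 2.
Proof.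
  rewrite FF_AA, cc_eq. assert (S := AA_sq x). assert (B := BB_bounds x).
  assert (P := ss_pos). assert (Q := ss_sq).
  assert (AA x <= ss) by nra.
  apply Rmult_le_reg_r with (2 * ss); [lra|].
  unfold Rdiv. rewrite Rmult_assoc, Rinv_l, Rmult_1_r by lra. lra.
Qed.

Lemma FF_diff a b : FF b - FF a = RInt gauss_pdf a b.
Proof.
  unfold FF. rewrite <- (RInt_Chasles (V:=R_CompleteNormedModule) gauss_pdf 0 a b) by apply gauss_ex.
  unfold plus; simpl. ring.
Qed.

Lemma int_nonneg a b : a <= b -> 0 <= RInt gauss_pdf a b.
Proof. intros. apply RInt_ge_0; [lra|apply gauss_ex|]. intros; apply Rlt_le, gauss_pos. Qed.

Lemma int_upper a b C : a <= b -> (forall s, a < s < b -> gauss_pdf s <= C) ->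
  RInt gauss_pdf a b <= C * (b - a).
Proof.
  intros Hab H. apply Rle_trans with (RInt (fun _ => C) a b).
  - apply RInt_le; [lra|apply gauss_ex|apply ex_RInt_const|exact H].
  - rewrite RInt_const. unfold scal; simpl; unfold mult; simpl. lra.
Qed.

Lemma gauss_ratio s y : gauss_pdf s = gauss_pdf y * exp ((y ^ 2 - s ^ 2) / 2).
Proof.
  rewrite !gauss_ee. unfold ee. rewrite Rmult_assoc, <- exp_plus. f_equal. f_equal. field.
Qed.

Lemma mills t : 0 <= t -> gauss_pdf t / (t + 1) <= RInt gauss_pdf t (t + 2).
Proof.
  intros Ht.
  set (mG := fun s => - (gauss_pdf s * (t + 2 - s) / (2 * (t + 1)))).
  set (dm := fun s => gauss_pdf s * (s * (t + 2 - s) + 1) / (2 * (t + 1))).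
  assert (D : forall s, is_derive mG s (dm s)).
  { intros s. unfold mG, dm. rewrite gauss_ee. unfold gauss_pdf.
    unfold ee. fold cc. generalize cc_pos; intro. auto_derive. lra.
    replace (- (s * (s * 1)) * / 2) with (- s ^ 2 / 2) by field. field. lra. }
  assert (I : is_RInt dm t (t + 2) (minus (mG (t + 2)) (mG t))).
  { apply (is_RInt_derive (V:=R_CompleteNormedModule)).
    - intros; apply D.
    - intros. apply dcont. unfold dm, gauss_pdf. auto_derive. generalize (sqrt_pos (2 * PI)). 
      auto. }
  assert (Ex : ex_RInt dm t (t + 2)) by (eexists; exact I).
  apply (is_RInt_unique (V:=R_CompleteNormedModule)) in I.
  apply Rle_trans with (RInt dm t (t + 2)).
  - rewrite I. unfold minus, plus, opp, mG; simpl. right. field. lra.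
  - apply RInt_le; [lra|exact Ex|apply gauss_ex|].
    intros s Hs. unfold dm. assert (P := gauss_pos s).
    unfold Rdiv. rewrite Rmult_assoc.
    rewrite <- (Rmult_1_r (gauss_pdf s)) at 2.
    apply Rmult_le_compat_l; [lra|].
    apply Rmult_le_reg_r with (2 * (t + 1)); [lra|].
    rewrite Rmult_assoc, Rinv_l, Rmult_1_r, Rmult_1_l by lra.
    assert (0 <= (s - t - 1) ^ 2) by apply pow2_ge_0.
    assert (0 <= t * (s - t)) by (apply Rmult_le_pos; lra).
    clear -H H0. nra.
Qed.


Lemma exp_le_inv y : 0 <= y < 1 -> exp y <= 1 / (1 - y).
Proof.
  intros Hy. assert (H := exp_ineq1_le (- y)).
  assert (P := exp_pos y).
  replace (exp y) with (/ exp (- y)) by (rewrite exp_Ropp, Rinv_inv; reflexivity).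
  unfold Rdiv. rewrite Rmult_1_l. apply Rinv_le_contravar; lra.
Qed.

Lemma num1 u a b : 0 <= u <= 1/3 -> 0 <= a <= 7 * u / 3 -> b <= 7 * u / 6 ->
  1 + a * exp b <= exp (3 * u).
Proof.
  intros Hu Ha Hb.
  assert (E1 : exp b <= 1 / (1 - 7 * u / 6)).
  { apply Rle_trans with (exp (7 * u / 6)).
    - destruct (Req_dec b (7 * u / 6)) as [->|]; [lra|]. left; apply exp_increasing; lra.
    - apply exp_le_inv; lra. }
  assert (E2 : (1 + u) ^ 3 <= exp (3 * u)).
  { replace (3 * u) with (u + u + u) by ring. rewrite !exp_plus.
    assert (H := exp_ineq1_le u). simpl.
    assert (0 <= 1 + u) by lra.
    apply Rle_trans with ((1 + u) * (1 + u) * (1 + u)); [right; ring|].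
    apply Rmult_le_compat; try nra. }
  assert (E3 : a * exp b <= (7 * u / 3) / (1 - 7 * u / 6)).
  { apply Rle_trans with (a * (1 / (1 - 7 * u / 6))).
    - apply Rmult_le_compat_l; lra.
    - unfold Rdiv. rewrite Rmult_1_l. apply Rmult_le_compat_r.
      + left; apply Rinv_0_lt_compat; lra.
      + lra. }
  assert (E4 : (7 * u / 3) / (1 - 7 * u / 6) <= (1 + u) ^ 3 - 1).
  { apply Rmult_le_reg_r with (1 - 7 * u / 6); [lra|].
    unfold Rdiv at 1. rewrite Rmult_assoc, Rinv_l, Rmult_1_r by lra.
    simpl. nra. }
  lra.
Qed.

Lemma num2 u a b : 0 <= u -> 0 <= a <= 2 * u -> b <= u ->
  1 + a * exp b <= exp (3 * u).
Proof.
  intros Hu Ha Hb.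
  assert (E1 : exp b <= exp u).
  { destruct (Req_dec b u) as [->|]; [lra|]. left; apply exp_increasing; lra. }
  replace (3 * u) with (u + 2 * u) by ring. rewrite exp_plus.
  assert (H1 := exp_ineq1_le u). assert (H2 := exp_ineq1_le (2 * u)).
  assert (P := exp_pos u). assert (P2 := exp_pos b).
  assert (a * exp b <= 2 * u * exp u) by (apply Rmult_le_compat; lra).
  nra.
Qed.

Lemma div_ge A p q : 0 < q -> A * q <= p -> A <= p / q.
Proof. intros. apply Rmult_le_reg_r with q; [lra|]. unfold Rdiv. rewrite Rmult_assoc, Rinv_l, Rmult_1_r by lra. lra. Qed.

Lemma div_le A p q : 0 < q -> p <= A * q -> p / q <= A.
Proof. intros. apply Rmult_le_reg_r with q; [lra|]. unfold Rdiv. rewrite Rmult_assoc, Rinv_l, Rmult_1_r by lra. lra. Qed.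

Lemma q_eq y : 1 - Phi y = / 2 - FF y.
Proof. rewrite Phi_val. lra. Qed.

Lemma q_diff a b : (1 - Phi a) - (1 - Phi b) = RInt gauss_pdf a b.
Proof. rewrite !q_eq, <- FF_diff. ring. Qed.

Lemma q_nonneg y : 0 <= 1 - Phi y.
Proof. rewrite q_eq. generalize (FF_le y). lra. Qed.

Lemma q_lower t : 0 <= t -> gauss_pdf t / (t + 1) <= 1 - Phi t.
Proof.
  intros Ht. assert (H := q_diff t (t + 2)). assert (H2 := q_nonneg (t + 2)).
  assert (H3 := mills t Ht). lra.
Qed.

Lemma q_lower' t : 0 <= t -> gauss_pdf t <= (t + 1) * (1 - Phi t).
Proof.
  intros Ht. assert (H := q_lower t Ht).
  apply Rmult_le_reg_r with (/ (t + 1)). apply Rinv_0_lt_compat; lra.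
  rewrite (Rmult_comm (t + 1)), Rmult_assoc, Rinv_r, Rmult_1_r by lra. exact H.
Qed.

Theorem propositionA2 (x h : R) :
  0 <= x ->
  Rabs h <= 1 / (3 * Rmax x 1) ->
  exp (- (3 * Rabs h * Rmax x 1)) <= (1 - Phi (x + h)) / (1 - Phi x) /\
  (1 - Phi (x + h)) / (1 - Phi x) <= exp (3 * Rabs h * Rmax x 1).
Proof.
  intros Hx Hh.
  set (M := Rmax x 1) in *.
  assert (HM1 : 1 <= M) by apply Rmax_r.
  assert (HMx : x <= M) by apply Rmax_l.
  assert (Hu : Rabs h * M <= 1 / 3).
  { apply Rmult_le_compat_r with (r := 3 * M) in Hh; [|lra].
    unfold Rdiv in Hh. rewrite Rmult_1_l, Rinv_l in Hh by lra. lra. }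
  assert (Ha0 := Rabs_pos h).
  set (qx := 1 - Phi x). set (q1 := 1 - Phi (x + h)).
  assert (Hqx : 0 < qx).
  { apply Rlt_le_trans with (gauss_pdf x / (x + 1)); [|apply q_lower; lra].
    apply Rdiv_lt_0_compat; [apply gauss_pos|lra]. }
  assert (Hphix := q_lower' x Hx). fold qx in Hphix.
  assert (Gx := gauss_pos x).
  replace (3 * Rabs h * M) with (3 * (Rabs h * M)) by ring.
  remember (Rabs h * M) as u eqn:Hudef.
  assert (Hu0 : 0 <= u) by (rewrite Hudef; apply Rmult_le_pos; lra).
  assert (Eu := exp_ineq1_le (3 * u)).
  assert (Eu' := exp_ineq1_le (- (3 * u))).
  assert (Epos := exp_pos (3 * u)). assert (Epos' := exp_pos (- (3 * u))).
  destruct (Rle_or_lt 0 h) as [Hh0|Hh0].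
  - rewrite Rabs_pos_eq in Hudef by lra.
    assert (Hdiff := q_diff x (x + h)). fold qx q1 in Hdiff.
    assert (Hup : RInt gauss_pdf x (x + h) <= gauss_pdf x * (x + h - x)).
    { apply int_upper; [lra|]. intros s Hs. rewrite (gauss_ratio s x).
      rewrite <- (Rmult_1_r (gauss_pdf x)) at 2. apply Rmult_le_compat_l; [lra|].
      rewrite <- exp_0. destruct (Req_dec ((x ^ 2 - s ^ 2) / 2) 0) as [->|]; [lra|].
      left; apply exp_increasing. nra. }
    assert (Hnn := int_nonneg x (x + h) ltac:(lra)).
    assert (Hr := gauss_ratio x (x + h)).
    assert (Hl1 := q_lower' (x + h) ltac:(lra)). fold q1 in Hl1.
    assert (Hq1 : 0 <= q1) by apply q_nonneg.
    set (b := ((x + h) ^ 2 - x ^ 2) / 2) in *.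
    set (a := h * (x + h + 1)).
    assert (Hb : b <= 7 * u / 6).
    { unfold b; rewrite Hudef. assert (h <= 1/3) by nra. nra. }
    assert (Ha : 0 <= a <= 7 * u / 3).
    { unfold a; rewrite Hudef. assert (h <= 1/3) by nra. split; nra. }
    assert (N := num1 u a b ltac:(lra) Ha Hb).
    assert (Hk : qx <= q1 * (1 + a * exp b)).
    { assert (Eb := exp_pos b).
      assert (gauss_pdf (x + h) * exp b * h <= (x + h + 1) * q1 * exp b * h).
      { apply Rmult_le_compat_r; [lra|]. apply Rmult_le_compat_r; lra. }
      unfold a. nra. }
    split.
    + apply div_ge; [lra|].
      assert (exp (- (3 * u)) * exp (3 * u) = 1) by (rewrite <- exp_plus; replace (- (3 * u) + 3 * u) with 0 by ring; apply exp_0).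
      nra.
    + apply div_le; [lra|]. nra.
  - rewrite Rabs_left in Hudef by lra.
    set (k := - h) in *.
    assert (Hdiff := q_diff (x + h) x). fold qx q1 in Hdiff.
    assert (Hup : RInt gauss_pdf (x + h) x <= gauss_pdf x * exp (k * x) * (x - (x + h))).
    { apply int_upper; [lra|]. intros s Hs. rewrite (gauss_ratio s x).
      apply Rmult_le_compat_l; [lra|].
      destruct (Req_dec ((x ^ 2 - s ^ 2) / 2) (k * x)) as [->|]; [lra|].
      left; apply exp_increasing. unfold k.
      destruct (Rle_or_lt 0 (x + s)); nra. }
    assert (Hnn := int_nonneg (x + h) x ltac:(lra)).
    set (a := k * (x + 1)). set (b := k * x).
    assert (Hb : b <= u) by (unfold b; rewrite Hudef; apply Rmult_le_compat_l; unfold k; lra).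
    assert (Ha : 0 <= a <= 2 * u) by (unfold a; rewrite Hudef; split; [apply Rmult_le_pos; unfold k; lra|]; replace (2 * (k * M)) with (k * (M + M)) by ring; apply Rmult_le_compat_l; unfold k; lra).
    assert (N := num2 u a b Hu0 Ha Hb).
    assert (Hk : q1 <= qx * (1 + a * exp b)).
    { assert (Eb := exp_pos b).
      assert (gauss_pdf x * exp b * k <= (x + 1) * qx * exp b * k).
      { apply Rmult_le_compat_r; [unfold k; lra|]. apply Rmult_le_compat_r; lra. }
      unfold a. replace (x - (x + h)) with k in Hup by (unfold k; ring). fold b in Hup. nra. }
    assert (E1 : exp (- (3 * u)) <= 1).
    { rewrite <- exp_0. destruct (Req_dec u 0) as [->|]. right; f_equal; ring.
      left; apply exp_increasing; lra. }
    split.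
    + apply div_ge; [lra|]. apply Rle_trans with (1 * qx); [apply Rmult_le_compat_r; lra|lra].
    + apply div_le; [lra|]. apply Rle_trans with (qx * (1 + a * exp b)); [lra|].
      rewrite Rmult_comm. apply Rmult_le_compat_r; lra.
Qed.
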